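(* Let $P\in\mathbb{R}_+^{n\times n}$ be sub-stochastic and $w\in\mathbb{R}^n_+$. For $c\in\mathbb{R}^n$ let $\underline x(c)$ and $\overline x(c)$ be the minimal and maximal solutions (entrywise order) of $x=S_0^w(P'x+c)$. Let $\mathcal T\cup\mathcal S_1\cup\dots\cup\mathcal S_m$ be the partition of $\{1,\dots,n\}$ into the transient part and the irreducible trapping sets of $\mathcal G_P$, and for each $l$ let $\pi^{(l)}$ be the invariant probability vector of the block $P_{\mathcal S_l\mathcal S_l}$ (i.e. $\pi^{(l)}\ge0$, $\mathbbm{1}'\pi^{(l)}=1$, $(P_{\mathcal S_l\mathcal S_l})'\pi^{(l)}=\pi^{(l)}$). Then for $p\ge1$, $$\max_{c\in\mathbb{R}^n}\|\overline x(c)-\underline x(c)\|_p^p=\sum_{l=1}^m\left(\min_{i\in\mathcal S_l}\frac{w_i}{\pi^{(l)}_i}\right)^p\|\pi^{(l)}\|_p^p.$$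
   Context: $P$ sub-stochastic: nonnegative with $P\mathbbm{1}\le\mathbbm{1}$. $(S_0^w(x))_i=\min\{\max\{x_i,0\},w_i\}$; $'$ is transpose; $P_{\mathcal A\mathcal B}$ is the restriction of $P$ to rows $\mathcal A$ and columns $\mathcal B$. The graph $\mathcal G_P$ has nodes $\{1,\dots,n\}$ and a link $(i,j)$ iff $P_{ij}>0$. A trapping set is a nonempty $\mathcal S$ with $P_{ij}=0$ for $i\in\mathcal S$, $j\notin\mathcal S$; irreducible if it strictly contains no other trapping set; the transient part is the set of nodes in no irreducible trapping set. The statement presupposes (as the paper does) that each block $P_{\mathcal S_l\mathcal S_l}$ has an invariant probability vector $\pi^{(l)}$. *)

(* Defs.v *)
From HB Require Import structures.
From mathcomp Require Import all_boot all_order all_algebra.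
From mathcomp Require Import all_classical all_reals exp.
Set Implicit Arguments. Unset Strict Implicit. Unset Printing Implicit Defensive.
Import Order.TTheory GRing.Theory Num.Theory.
Local Open Scope ring_scope.

Definition substochastic (R : realType) n (P : 'M[R]_n) : Prop :=
  (forall i j, 0 <= P i j) /\ (forall i, \sum_j P i j <= 1).

Definition S0 (R : realType) n (w x : 'cV[R]_n) : 'cV[R]_n :=
  \col_i Num.min (Num.max (x i 0) 0) (w i 0).

Definition vle (R : realType) n (x y : 'cV[R]_n) : Prop := forall i, x i 0 <= y i 0.

Definition is_sol (R : realType) n (P : 'M[R]_n) (w c x : 'cV[R]_n) : Prop :=
  x = S0 w (P^T *m x + c).

Definition is_min_sol (R : realType) n (P : 'M[R]_n) (w c x : 'cV[R]_n) : Prop :=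
  is_sol P w c x /\ forall y, is_sol P w c y -> vle x y.

Definition is_max_sol (R : realType) n (P : 'M[R]_n) (w c x : 'cV[R]_n) : Prop :=
  is_sol P w c x /\ forall y, is_sol P w c y -> vle y x.

Definition link (R : realType) n (P : 'M[R]_n) (i j : 'I_n) : bool := 0 < P i j.

Definition trapping (R : realType) n (P : 'M[R]_n) (S : {set 'I_n}) : Prop :=
  S != finset.set0 /\ forall i j, i \in S -> j \notin S -> ~~ link P i j.

Definition irr_trapping (R : realType) n (P : 'M[R]_n) (S : {set 'I_n}) : Prop :=
  trapping P S /\ forall S', trapping P S' -> S' \subset S -> S' = S.

Definition transient (R : realType) n (P : 'M[R]_n) (i : 'I_n) : Prop :=
  forall S, irr_trapping P S -> i \notin S.

(* pi is an invariant probability vector of the block P_{SS} (entries outside S unused) *)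
Definition invariant_prob (R : realType) n (P : 'M[R]_n) (S : {set 'I_n})
    (pi : 'I_n -> R) : Prop :=
  (forall i, i \in S -> 0 <= pi i) /\ \sum_(i in S) pi i = 1 /\
  (forall j, j \in S -> \sum_(i in S) P i j * pi i = pi j).

(* minimum of f over a (nonempty) set S; 0 on the empty set (never used) *)
Definition setmin (R : realType) n (S : {set 'I_n}) (f : 'I_n -> R) : R :=
  match [pick i in S] with
  | Some i0 => \big[Num.min/f i0]_(i in S) f i
  | None => 0
  end.

Definition pnormp (R : realType) n (p : R) (x : 'cV[R]_n) : R :=
  \sum_i `|x i 0| `^ p.

(* Main.v *)
Require Import Defs.
From HB Require Import structures.
From mathcomp Require Import all_boot all_order all_algebra.
From mathcomp Require Import all_classical all_reals exp.
From mathcomp Require Import lra.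
From Stdlib Require Import Classical.
Set Implicit Arguments. Unset Strict Implicit. Unset Printing Implicit Defensive.
Import Order.TTheory GRing.Theory Num.Theory.
Local Open Scope ring_scope.
Section Struct.
Variables (R : realType) (n : nat) (P : 'M[R]_n).

Lemma trap_link S i j : trapping P S -> i \in S -> link P i j -> j \in S.
Proof.
move=> [_ H] iS l; apply/negPn/negP => jS.
by move: (H i j iS jS); rewrite l.
Qed.

Lemma irr_disj S S' i : irr_trapping P S -> irr_trapping P S' ->
  i \in S -> i \in S' -> S = S'.
Proof.
move=> [[ne1 t1] m1] [[ne2 t2] m2] i1 i2.
have tI : trapping P (S :&: S').
  split; first by apply/set0Pn; exists i; rewrite inE i1 i2.
  move=> a b; rewrite !inE => /andP[a1 a2]; rewrite negb_and => /orP[b1|b2].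
    exact: t1. exact: t2.
have e1 := m1 _ tI (subsetIl _ _). have e2 := m2 _ tI (subsetIr _ _).
by rewrite -e1 e2.
Qed.

Lemma exists_irr Z : trapping P Z -> exists S, irr_trapping P S /\ S \subset Z.
Proof.
move: {2}#|Z| (leqnn #|Z|) => k; elim: k Z => [|k IH] Z.
  rewrite leqn0 cards_eq0 => /eqP -> [].
  by rewrite eqxx.
move=> hk tZ; case: (classic (irr_trapping P Z)) => [h|h]; first by exists Z.
have [Z' [t [s ne]]] : exists Z', trapping P Z' /\ Z' \subset Z /\ Z' <> Z.
  apply: NNPP => hn; apply: h; split => // Z' t s; apply: NNPP => ne.
  by apply: hn; exists Z'.
have lt : (#|Z'| < #|Z|)%N.
  apply: fintype.proper_card. rewrite finset.properEneq s andbT. by apply/eqP.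
have [S [iS sS]] := IH Z' (ltnSE (leq_trans lt hk)) t.
by exists S; split => //; apply: fintype.subset_trans sS s.
Qed.

Lemma pos_prop S (v : 'I_n -> R) : irr_trapping P S ->
  (forall i j, i \in S -> link P i j -> 0 < v i -> 0 < v j) ->
  forall k, k \in S -> 0 < v k -> forall i, i \in S -> 0 < v i.
Proof.
move=> [[ne tS] mS] prop k kS vk.
have tY : trapping P [set i in S | 0 < v i].
  split; first by apply/set0Pn; exists k; rewrite inE kS vk.
  move=> a b; rewrite !inE => /andP[aS va] hb; apply/negP => l.
  have bS : b \in S := trap_link (conj ne tS) aS l.
  by rewrite bS (prop a b aS l va) in hb.
have sub : [set i in S | 0 < v i] \subset S.
  by apply/fintype.subsetP => x; rewrite inE => /andP[].
have E := mS _ tY sub.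
move=> i iS.
have : i \in [set i in S | 0 < v i].
  by rewrite E.
by rewrite inE iS.
Qed.

Lemma nontrans_ex i : ~ transient P i -> exists S, irr_trapping P S /\ i \in S.
Proof.
move=> h; apply: NNPP => hn; apply: h => S hS; apply/negP => iS.
by apply: hn; exists S.
Qed.

End Struct.

Section Aux.
Variables (R : realType) (n : nat).

Lemma setmin_le (S : {set 'I_n}) (f : 'I_n -> R) i : i \in S -> setmin S f <= f i.
Proof.
move=> iS; rewrite /setmin; case: pickP => [i0 _|H]; first exact: bigmin_le_cond.
by move: (H i); rewrite iS.
Qed.

Lemma le_setmin (S : {set 'I_n}) (f : 'I_n -> R) a : (exists i, i \in S) ->
  (forall i, i \in S -> a <= f i) -> a <= setmin S f.
Proof.
case=> j jS H; rewrite /setmin; case: pickP => [i0 i0S|H0]; last by move: (H0 j); rewrite jS.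
by apply: le_bigmin; [exact: H | exact: H].
Qed.

Lemma setmin_att (S : {set 'I_n}) (f : 'I_n -> R) : (exists i, i \in S) ->
  exists k, k \in S /\ setmin S f = f k.
Proof.
case=> j jS; rewrite /setmin; case: pickP => [i0 i0S|H0]; last by move: (H0 j); rewrite jS.
elim/big_rec: _ => [|i x iS [k [kS ->]]]; first by exists i0.
have [h|h] := leP (f i) (f k).
  by exists i.
by exists k.
Qed.

Lemma clamp_bnd (a w : R) : 0 <= w -> 0 <= Num.min (Num.max a 0) w /\ Num.min (Num.max a 0) w <= w.
Proof.
move=> w0; split; last by rewrite ge_min lexx orbT.
by rewrite le_min w0 le_max lexx orbT.
Qed.

Lemma clamp_lip (a b w : R) : 0 <= w -> b <= a ->
  Num.min (Num.max b 0) w <= Num.min (Num.max a 0) w /\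
  Num.min (Num.max a 0) w - Num.min (Num.max b 0) w <= a - b.
Proof.
move=> w0 ba.
have [ha|ha] := leP a 0; have [hb|hb] := leP b 0;
  rewrite ?(min_l w0);
  try (have [h1|h1] := leP a w); try (have [h2|h2] := leP b w); split; lra.
Qed.

End Aux.

Section Analysis.
Variables (R : realType) (n : nat) (P : 'M[R]_n) (w : 'cV[R]_n)
  (xlo xhi : 'cV[R]_n -> 'cV[R]_n) (pi : {set 'I_n} -> 'I_n -> R).
Hypothesis HP : substochastic P.
Hypothesis Hw : forall i, 0 <= w i 0.
Hypothesis Hlo : forall c, is_min_sol P w c (xlo c).
Hypothesis Hhi : forall c, is_max_sol P w c (xhi c).
Hypothesis Hpi : forall S, irr_trapping P S -> invariant_prob P S (pi S).

Lemma P0 i j : 0 <= P i j. Proof. exact: HP.1. Qed.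
Lemma Prow i : \sum_j P i j <= 1. Proof. exact: HP.2. Qed.

Lemma link_pos i j : ~~ link P i j -> P i j = 0.
Proof.
rewrite /link -leNgt => h; apply/eqP; rewrite eq_le h P0.
done.
Qed.

Lemma irr_ne S : irr_trapping P S -> exists i, i \in S.
Proof. by move=> [[/set0Pn [i hi] _] _]; exists i. Qed.

Lemma pi_pos S : irr_trapping P S -> forall i, i \in S -> 0 < pi S i.
Proof.
move=> iS; have [p0 [p1 p2]] := Hpi iS.
have [k kS pk] : exists2 k, k \in S & 0 < pi S k.
  apply: NNPP => h.
  have : \sum_(i in S) pi S i = 0.
    apply: big1 => i iS'; apply/eqP; rewrite eq_le p0 // andbT leNgt.
    by apply/negP => hp; apply: h; exists i.
  by rewrite p1 => /eqP; rewrite oner_eq0.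
apply: (pos_prop iS _ kS pk) => i j iS' l hi.
have jS := trap_link (proj1 iS) iS' l.
rewrite -(p2 j jS); apply: (@lt_le_trans _ _ (P i j * pi S i)).
  by rewrite mulr_gt0.
rewrite (bigD1 i) //= lerDl; apply: sumr_ge0 => k0 /andP[k0S _].
by rewrite mulr_ge0 ?P0 ?p0.
Qed.

Lemma sol_bnd c x : is_sol P w c x -> forall i, 0 <= x i 0 /\ x i 0 <= w i 0.
Proof. by move=> hx i; rewrite hx /S0 mxE; apply: clamp_bnd. Qed.

Definition d c i := xhi c i 0 - xlo c i 0.

Lemma d_ge0 c i : 0 <= d c i.
Proof. by rewrite subr_ge0; apply: (Hlo c).2; exact: (Hhi c).1. Qed.

Lemma d_lew c i : d c i <= w i 0.
Proof.
have [h1 h2] := sol_bnd (Hhi c).1 i; have [h3 h4] := sol_bnd (Hlo c).1 i.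
rewrite /d; lra.
Qed.

Lemma d_le c j : d c j <= \sum_i P i j * d c i.
Proof.
have hh := (Hhi c).1; have hl := (Hlo c).1.
rewrite /d {1}hh {1}hl /S0 !mxE.
set A := (\sum_k _ + _); set B := (\sum_k _ + _).
have E : A - B = \sum_i P i j * (xhi c i 0 - xlo c i 0).
  rewrite /A /B; under [RHS]eq_bigr do rewrite mulrBr.
  rewrite sumrB; under eq_bigr do rewrite mxE; under [X in _ - (X + _)]eq_bigr do rewrite mxE.
  lra.
have BA : B <= A.
  rewrite -subr_ge0 E; apply: sumr_ge0 => i _; apply: mulr_ge0; first exact: P0.
  exact: d_ge0.
rewrite -E; exact: (clamp_lip (Hw j) BA).2.
Qed.

Lemma d_eq c j : d c j = \sum_i P i j * d c i.
Proof.
pose D j := \sum_i P i j * d c i - d c j.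
have D0 : forall j, 0 <= D j by move=> k; rewrite /D subr_ge0 d_le.
have SD : \sum_j D j <= 0.
  rewrite /D sumrB exchange_big /= subr_le0; apply: ler_sum => i _.
  rewrite -mulr_suml mulrC; apply: ler_piMr; [exact: d_ge0 | exact: Prow].
have SD0 : \sum_j D j = 0 by apply/eqP; rewrite eq_le SD sumr_ge0.
have := psumr_eq0P (fun k _ => D0 k) SD0 (i := j) isT.
by rewrite /D => /eqP; rewrite subr_eq0 => /eqP.
Qed.


Lemma nontrans_zero i j : ~ transient P i -> transient P j -> P i j = 0.
Proof.
move=> hi hj; have [S [hS iS]] := nontrans_ex hi.
apply: link_pos; apply/negP => l.
by move: (hj S hS); rewrite (trap_link (proj1 hS) iS l).
Qed.

Lemma d_trans c i : transient P i -> d c i = 0.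
Proof.
pose T := [set i | `[< transient P i >]].
have inT : forall i, (i \in T) = `[< transient P i >] by move=> k; rewrite inE.
have C1 : forall i j, i \notin T -> j \in T -> P i j = 0.
  move=> a b; rewrite !inT => /asboolPn ha /asboolP hb; exact: nontrans_zero.
pose s i := \sum_(j in T) P i j.
have sle : forall i, s i <= 1.
  move=> a; apply: le_trans (Prow a); rewrite /s [X in _ <= X](bigID (mem T)) /= lerDl.
  by apply: sumr_ge0 => k _; exact: P0.
have sT : \sum_(j in T) d c j = \sum_(i in T) d c i * s i.
  transitivity (\sum_(j in T) \sum_(i in T) P i j * d c i).
    apply: eq_bigr => j jT; rewrite d_eq (bigID (mem T)) /= [X in _ + X]big1 ?addr0 //.
    by move=> k kT; rewrite C1 ?mul0r.
  rewrite exchange_big /=; apply: eq_bigr => k _; rewrite /s mulr_sumr.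
  by apply: eq_bigr => j _; rewrite mulrC.
have Z0 : forall i, i \in T -> d c i * (1 - s i) = 0.
  apply: psumr_eq0P.
    move=> k _; apply: mulr_ge0; first exact: d_ge0.
    by rewrite subr_ge0.
  under eq_bigr do rewrite mulrBr mulr1.
  by rewrite sumrB sT subrr.
move=> hi; apply: NNPP => hne.
have dpos : 0 < d c i by rewrite lt_neqAle eq_sym; apply/andP; split; [apply/eqP|exact: d_ge0].
have tZ : trapping P [set k in T | 0 < d c k].
  split; first by apply/set0Pn; exists i; rewrite inE inT dpos andbT; apply/asboolP.
  move=> a b; rewrite !inE -!inT => /andP[aT da] hb; apply/negP => l.
  have sa : s a = 1.
    have := Z0 a aT; move/eqP; rewrite mulf_eq0 (gt_eqF da) /= subr_eq0 => /eqP.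
    by move=> <-.
  case bT: (b \in T).
    move: hb; rewrite bT /= => /negP; apply; rewrite d_eq.
    apply: (@lt_le_trans _ _ (P a b * d c a)); first by rewrite mulr_gt0.
    rewrite (bigD1 a) //= lerDl; apply: sumr_ge0 => k _.
    by rewrite mulr_ge0 ?P0 ?d_ge0.
  have := Prow a; rewrite (bigID (mem T)) /=.
  have : P a b <= \sum_(k | k \notin T) P a k.
    rewrite (bigD1 b) /=; last by rewrite bT.
    rewrite lerDl; apply: sumr_ge0 => k _; exact: P0.
  move: sa; rewrite /s /link in l * => ->.
  move: l; lra.
have [S [hS sub]] := exists_irr tZ.
have [k kS] := irr_ne hS.
have : k \in [set k in T | 0 < d c k] by apply: (fintype.subsetP sub).
rewrite inE inT => /andP[/asboolP hk _].
by move: (hk S hS); rewrite kS.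
Qed.

Lemma outside_zero c S j i : irr_trapping P S -> j \in S -> i \notin S ->
  P i j * d c i = 0.
Proof.
move=> hS jS iS.
case: (classic (transient P i)) => ht; first by rewrite d_trans // mulr0.
have [S' [hS' iS']] := nontrans_ex ht.
case: (ltrP 0 (P i j)) => h.
  have jS' := trap_link (proj1 hS') iS' h.
  by move: iS; rewrite (irr_disj hS hS' jS jS') iS'.
have -> : P i j = 0 by apply/eqP; rewrite eq_le h P0.
by rewrite mul0r.
Qed.

Lemma d_irr c S : irr_trapping P S -> exists a, 0 <= a /\
  a <= setmin S (fun i => w i 0 / pi S i) /\ forall i, i \in S -> d c i = a * pi S i.
Proof.
move=> hS; have ne := irr_ne hS.
have [k [kS ka]] := setmin_att (fun i => d c i / pi S i) ne.
pose al := d c k / pi S k.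
have pp := pi_pos hS.
have H1 : forall i, i \in S -> al * pi S i <= d c i.
  by move=> i iS; rewrite -ler_pdivlMr ?pp // /al -ka; apply: setmin_le.
pose e i := d c i - al * pi S i.
have e0 : forall i, i \in S -> 0 <= e i by move=> i iS; rewrite subr_ge0 H1.
have [_ [_ p2]] := Hpi hS.
have eE : forall j, j \in S -> e j = \sum_(i in S) P i j * e i.
  move=> j jS; rewrite /e d_eq (bigID (mem S)) /= [X in _ + X - _]big1; last first.
    by move=> i iS; apply: outside_zero hS jS iS.
  rewrite addr0 -(p2 j jS) mulr_sumr.
  rewrite [RHS](eq_bigr (fun i => P i j * d c i - al * (P i j * pi S i))).
    by rewrite sumrB.
  by move=> i _; rewrite mulrBr [al * (_ * _)]mulrCA.
have ek : e k = 0 by rewrite /e /al divfK ?subrr // lt0r_neq0 // pp.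
have eZ : forall i, i \in S -> e i = 0.
  move=> i iS; apply/eqP; rewrite eq_le e0 // andbT leNgt; apply/negP => ei.
  suff hk : 0 < e k by rewrite ek ltxx in hk.
  apply: (pos_prop (v:=e) hS _ iS ei kS) => a b aS l ea; have bS := trap_link (proj1 hS) aS l.
  rewrite eE //; apply: (@lt_le_trans _ _ (P a b * e a)); first by rewrite mulr_gt0.
  rewrite (bigD1 a) //= lerDl; apply: sumr_ge0 => m /andP[mS _].
  by rewrite mulr_ge0 ?P0 ?e0.
exists al; split; first by rewrite /al divr_ge0 ?d_ge0 // ltW ?pp.
split; last by move=> i iS; have := eZ i iS; rewrite /e => /eqP; rewrite subr_eq0 => /eqP.
apply: le_setmin => // i iS; rewrite ler_pdivlMr ?pp //.
have := eZ i iS; rewrite /e => /eqP; rewrite subr_eq0 => /eqP <-; exact: d_lew.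
Qed.


Lemma cs_trans (F : {set 'I_n} -> R) j : transient P j ->
  \sum_(S | `[< irr_trapping P S >] && (j \in S)) F S = 0.
Proof.
move=> hj; rewrite big_pred0 // => S; apply/negbTE/negP => /andP[/asboolP hS jS].
by move: (hj S hS); rewrite jS.
Qed.

Lemma cs_irr (F : {set 'I_n} -> R) j S0 : irr_trapping P S0 -> j \in S0 ->
  \sum_(S | `[< irr_trapping P S >] && (j \in S)) F S = F S0.
Proof.
move=> h0 j0; rewrite (big_pred1 S0) // => S /=.
apply/andP/eqP => [[/asboolP hS jS]|->]; first exact: irr_disj hS h0 jS j0.
by split => //; apply/asboolP.
Qed.

Lemma decomp (g : 'I_n -> R) : (forall i, transient P i -> g i = 0) ->
  \sum_i g i = \sum_(S | `[< irr_trapping P S >]) \sum_(i in S) g i.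
Proof.
move=> hg; rewrite (exchange_big_dep xpredT) //=; apply: eq_bigr => i _.
case: (classic (transient P i)) => ht.
  by rewrite (cs_trans (fun _ => g i)) // hg.
have [S0 [h0 i0]] := nontrans_ex ht.
by rewrite (cs_irr (fun _ => g i) h0 i0).
Qed.

Lemma pn_eq c p : 1 <= p -> pnormp p (xhi c - xlo c) =
  \sum_(S | `[< irr_trapping P S >]) \sum_(i in S) `|d c i| `^ p.
Proof.
move=> p1; rewrite /pnormp.
have -> : \sum_i `|(xhi c - xlo c) i 0| `^ p = \sum_i `|d c i| `^ p.
  by apply: eq_bigr => i _; rewrite !mxE.
apply: decomp => i ht; rewrite d_trans // normr0 powR0 //.
by rewrite gt_eqF // (lt_le_trans ltr01 p1).
Qed.

Lemma inner_eq c (p : R) (S : {set 'I_n}) (a : R) : 0 <= a -> (forall i, i \in S -> d c i = a * pi S i) ->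
  \sum_(i in S) `|d c i| `^ p = a `^ p * \sum_(i in S) `|pi S i| `^ p.
Proof.
move=> a0 H; rewrite mulr_sumr; apply: eq_bigr => i iS.
by rewrite H // normrM (ger0_norm a0) powRM.
Qed.

Definition mS S := setmin S (fun i => w i 0 / pi S i).

Lemma upper c p : 1 <= p -> pnormp p (xhi c - xlo c) <=
  \sum_(S : {set 'I_n} | `[< irr_trapping P S >]) (setmin S (fun i => w i 0 / pi S i)) `^ p *
             \sum_(i in S) `|pi S i| `^ p.
Proof.
move=> p1; rewrite pn_eq //; apply: ler_sum => S /asboolP hS.
have [a [a0 [am ha]]] := d_irr c hS.
rewrite (inner_eq p a0 ha); apply: ler_wpM2r.
  by apply: sumr_ge0 => i _; apply: powR_ge0.
apply: (ge0_ler_powR (le_trans ler01 p1)) => //; rewrite nnegrE //.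
exact: le_trans am.
Qed.


Lemma mS_ge0 S : irr_trapping P S -> 0 <= mS S.
Proof.
move=> hS; apply: le_setmin (irr_ne hS) _ => i iS.
by rewrite divr_ge0 ?Hw // ltW // pi_pos.
Qed.

Lemma mS_le S i : irr_trapping P S -> i \in S -> mS S * pi S i <= w i 0.
Proof. by move=> hS iS; rewrite -ler_pdivlMr ?pi_pos //; apply: setmin_le. Qed.

Definition c0 : 'cV[R]_n :=
  \col_j (if `[< transient P j >] then - (P^T *m w) j 0 - 1 else 0).
Definition yf j := \sum_(S | `[< irr_trapping P S >] && (j \in S)) mS S * pi S j.
Definition y0 : 'cV[R]_n := \col_j yf j.

Lemma yf_trans j : transient P j -> yf j = 0.
Proof. by move=> ht; rewrite /yf (cs_trans (fun S => mS S * pi S j)). Qed.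

Lemma yf_irr j S0 : irr_trapping P S0 -> j \in S0 -> yf j = mS S0 * pi S0 j.
Proof. by move=> h0 j0; rewrite /yf (cs_irr (fun S => mS S * pi S j) h0 j0). Qed.

Lemma yf_bnd j : 0 <= yf j /\ yf j <= w j 0.
Proof.
case: (classic (transient P j)) => ht.
  by rewrite yf_trans //; split => //; apply: Hw.
have [S0 [h0 j0]] := nontrans_ex ht.
rewrite (yf_irr h0 j0); split; last exact: mS_le.
by rewrite mulr_ge0 ?mS_ge0 // ltW ?pi_pos.
Qed.

Lemma c0_le j : c0 j 0 <= 0.
Proof.
rewrite mxE; case: asboolP => _ //.
have : 0 <= (P^T *m w) j 0.
  by rewrite mxE; apply: sumr_ge0 => i _; rewrite mxE mulr_ge0 ?P0 ?Hw.
lra.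
Qed.

Lemma zero_sol : is_sol P w c0 0.
Proof.
rewrite /is_sol mulmx0 add0r /S0; apply/matrixP => i k; rewrite (ord1 k) !mxE.
have gen : forall x, x <= 0 -> 0 = Num.min (Num.max x 0) (w i 0).
  by move=> x hx; rewrite (max_r hx) (min_l (Hw i)).
by apply: gen; have := c0_le i; rewrite !mxE.
Qed.

Lemma xlo0 i : xlo c0 i 0 = 0.
Proof.
apply/eqP; rewrite eq_le (sol_bnd (Hlo c0).1 i).1 andbT.
by have := (Hlo c0).2 _ zero_sol i; rewrite mxE.
Qed.

Lemma y_sol : is_sol P w c0 y0.
Proof.
rewrite /is_sol /S0; apply/matrixP => j k; rewrite (ord1 k) !mxE.
under eq_bigr do rewrite !mxE.
case: (classic (transient P j)) => ht.
  rewrite (asboolT ht) yf_trans //.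
  under [X in - X]eq_bigr do rewrite mxE.
  have : \sum_i P i j * yf i <= \sum_i P i j * w i 0.
    by apply: ler_sum => i _; apply: ler_wpM2l; [exact: P0 | exact: (yf_bnd i).2].
  move=> hs; rewrite max_r; first by rewrite min_l ?Hw.
  lra.
have [S0 [h0 j0]] := nontrans_ex ht.
rewrite (asboolF ht) addr0 (yf_irr h0 j0).
have E : \sum_i P i j * yf i = mS S0 * pi S0 j.
  rewrite (bigID (mem S0)) /= [X in _ + X]big1 ?addr0; last first.
    move=> i iS; case: (classic (transient P i)) => hti.
      by rewrite yf_trans // mulr0.
    have [S1 [h1 i1]] := nontrans_ex hti.
    case: (ltrP 0 (P i j)) => h.
      have jS1 := trap_link (proj1 h1) i1 h.
      by move: iS; rewrite (irr_disj h0 h1 j0 jS1) i1.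
    have -> : P i j = 0 by apply/eqP; rewrite eq_le h P0.
    by rewrite mul0r.
  have [_ [_ p2]] := Hpi h0.
  rewrite -(p2 j j0) mulr_sumr; apply: eq_bigr => i iS.
  by rewrite (yf_irr h0 iS) mulrCA.
have hb := yf_bnd j; rewrite (yf_irr h0 j0) in hb.
by rewrite E (max_l hb.1) (min_l hb.2).
Qed.

Lemma exist_part p : 1 <= p -> exists c, pnormp p (xhi c - xlo c) =
  \sum_(S : {set 'I_n} | `[< irr_trapping P S >]) (setmin S (fun i => w i 0 / pi S i)) `^ p *
             \sum_(i in S) `|pi S i| `^ p.
Proof.
move=> p1; exists c0; rewrite pn_eq //; apply: eq_bigr => S /asboolP hS.
have [a [a0 [am ha]]] := d_irr c0 hS.
rewrite (inner_eq p a0 ha); congr (_ `^ _ * _).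
apply/eqP; rewrite eq_le am /=; have [i iS] := irr_ne hS.
rewrite -(ler_pM2r (pi_pos hS iS)) -ha // /d xlo0 subr0.
rewrite -/(mS S) -(yf_irr hS iS).
by have := (Hhi c0).2 _ y_sol i; rewrite mxE.
Qed.

End Analysis.

Theorem corollary2 (R : realType) (n : nat) (P : 'M[R]_n) (w : 'cV[R]_n)
    (xlo xhi : 'cV[R]_n -> 'cV[R]_n) (pi : {set 'I_n} -> 'I_n -> R) (p : R) :
  substochastic P ->
  (forall i, 0 <= w i 0) ->
  (forall c, is_min_sol P w c (xlo c)) ->
  (forall c, is_max_sol P w c (xhi c)) ->
  (forall S, irr_trapping P S -> invariant_prob P S (pi S)) ->
  1 <= p ->
  let V := \sum_(S : {set 'I_n} | `[< irr_trapping P S >])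
             (setmin S (fun i => w i 0 / pi S i)) `^ p *
             \sum_(i in S) `|pi S i| `^ p in
  (forall c, pnormp p (xhi c - xlo c) <= V) /\
  (exists c, pnormp p (xhi c - xlo c) = V).
Proof.
move=> HP Hw Hlo Hhi Hpi p1 V; split.
  by move=> c; rewrite /V; apply: (upper HP Hw Hlo Hhi Hpi c p1).
by rewrite /V; apply: (exist_part HP Hw Hlo Hhi Hpi p1).
Qed.
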